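(* Let $L$ be an upper semimodular lattice of finite length. Let $\xi=(x_1,\dots,x_k)\in L^k$ and let $z\in L$ with $z\not\le c_1(\xi)$. Put $$P_\xi=\{i: x_i\parallel z\},\qquad B_\xi=\{i: x_i<z\}.$$ If $|P_\xi|\le|B_\xi|$, then $z\notin M(\xi)$.
   Context: A lattice is upper semimodular if for all $x,y$, $x\wedge y\prec x$ implies $y\prec x\vee y$. $d(x,y)$ is the length of a shortest path between $x$ and $y$ in the undirected covering graph of $L$. $c_1(\xi)=x_1\vee\dots\vee x_k$. $M(\xi)$ is the set of medians of $\xi$, i.e. the elements $y\in L$ minimizing $r(y,\xi)=\sum_{i=1}^k d(y,x_i)$. $x\parallel z$ means that $x$ and $z$ are incomparable. *)

(* Defs.v *)
From HB Require Import structures.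
From mathcomp Require Import all_boot all_order.
From mathcomp Require Import boolp.
Set Implicit Arguments. Unset Strict Implicit. Unset Printing Implicit Defensive.
Import Order.TTheory.
Local Open Scope order_scope.

Section Lat.
Context {disp : Order.disp_t} {L : latticeType disp}.

Definition covers (x y : L) : Prop := x < y /\ ~ (exists w : L, x < w /\ w < y).

Definition upper_semimodular : Prop :=
  forall x y : L, covers (x `&` y) x -> covers y (x `|` y).

Definition finite_length : Prop :=
  exists N : nat, forall s : seq L, sorted <%O s -> (size s <= N)%N.

Definition cover_adj (x y : L) : Prop := covers x y \/ covers y x.

Fixpoint walk (n : nat) (x y : L) : Prop :=
  match n with
  | 0 => x = y
  | S m => exists w, cover_adj x w /\ walk m w y
  end.

(* d(x,y): length of a shortest walk (0 by convention if none exists,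
   which never happens in a lattice of finite length) *)
Definition dist (x y : L) : nat :=
  match pselect (exists n, `[< walk n x y >]) with
  | left h => ex_minn h
  | right _ => 0%N
  end.

Definition remoteness (k : nat) (xi : 'I_k -> L) (y : L) : nat :=
  (\sum_(i < k) dist y (xi i))%N.

Definition is_median (k : nat) (xi : 'I_k -> L) (y : L) : Prop :=
  forall y' : L, (remoteness xi y <= remoteness xi y')%N.

End Lat.

(* Main.v *)
Require Import Defs.
From HB Require Import structures.
From mathcomp Require Import all_boot all_order.
From mathcomp Require Import boolp.
From mathcomp Require Import zify.
Import Order.TTheory.
Local Open Scope order_scope.

Section Aux.
Context {disp : Order.disp_t} {L : latticeType disp}.
Hypothesis hUSM : upper_semimodular (L := L).
Variable N : nat.
Hypothesis hN : forall s : seq L, sorted <%O s -> (size s <= N)%N.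

Lemma covers_lt {a b : L} : covers a b -> a < b.
Proof. by case. Qed.

Lemma cover_eq {a c d : L} : covers a c -> a < d -> d <= c -> d = c.
Proof.
move=> [_ hn] ad dc; case: (boolP (d == c)) => [/eqP//|ndc].
by exfalso; apply: hn; exists d; split => //; rewrite lt_neqAle ndc dc.
Qed.

Lemma join_cover {a b : L} (c : L) : covers a b ->
  a `|` c = b `|` c \/ covers (a `|` c) (b `|` c).
Proof.
move=> hab; have ab := ltW (covers_lt hab).
case: (boolP (b <= a `|` c)) => hb.
  left; apply: le_anti; rewrite leU2 //= leUx hb leUr //.
right.
have hm : b `&` (a `|` c) = a.
  have ad : a <= b `&` (a `|` c) by rewrite lexI ab leUl.
  case: (boolP (a == b `&` (a `|` c))) => [/eqP <-//|na].
  have := @cover_eq a b (b `&` (a `|` c)) hab; rewrite lt_neqAle na ad leIl.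
  by move=> /(_ isT isT) e; move: hb; rewrite -e leIr.
have := hUSM b (a `|` c); rewrite hm => /(_ hab).
by rewrite joinCA joinA (join_r ab).
Qed.

Lemma walk_cat m n (a b c : L) : walk m a b -> walk n b c -> walk (m + n) a c.
Proof.
elim: m a => [|m IH] a /=; first by move=> ->.
by move=> [w [hw1 hw2]] h; exists w; split => //; apply: IH.
Qed.
Arguments walk_cat {m n a b c}.

Lemma walk_rev n (a b : L) : walk n a b -> walk n b a.
Proof.
elim: n a => [|n IH] a; first by move=> /= ->.
move=> [w [hw1 hw2]]; rewrite -addn1; apply: walk_cat (IH _ hw2) _.
by exists a; split => //; case: hw1; [right|left].
Qed.
Arguments walk_rev {n a b}.

Fixpoint cpath (a : L) (s : seq L) : Prop :=
  match s with [::] => True | d :: s' => covers a d /\ cpath d s' end.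

Lemma cpath_path (a : L) s : cpath a s -> path <%O a s.
Proof. by elim: s a => //= d s IH a [/covers_lt -> /IH]. Qed.
Arguments cpath_path {a s}.

Lemma path_le_last (a : L) s : path <%O a s -> a <= last a s.
Proof.
elim: s a => //= d s IH a /andP[ad /IH]; exact/le_trans/ltW.
Qed.
Arguments path_le_last {a s}.

Definition lam (a b : L) : nat :=
  \max_(n < N.+1 | `[< exists s, path <%O a s /\ last a s = b /\ size s = n >]) n.

Lemma lam_ub (a b : L) s : path <%O a s -> last a s = b -> (size s <= lam a b)%N.
Proof.
move=> hp hl.
have hs : (size s < N.+1)%N by have := hN (a :: s) hp; rewrite /= => /leqW.
have := @leq_bigmax_cond _
  (fun n : 'I_N.+1 => `[< exists s, path <%O a s /\ last a s = b /\ size s = n >])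
  (fun n => nat_of_ord n) (Ordinal hs).
by apply; apply/asboolP; exists s.
Qed.
Arguments lam_ub {a b s}.

Lemma lam_ex (a b : L) : a <= b -> exists s, path <%O a s /\ last a s = b /\ size s = lam a b.
Proof.
move=> ab.
pose P := (fun n : 'I_N.+1 => `[< exists s, path <%O a s /\ last a s = b /\ size s = n >]).
have hN1 : (1 < N.+1)%N by have := hN [:: a]; apply.
have [i0 Pi0] : exists i0, P i0.
  case: (boolP (a == b)) => [/eqP eab|nab].
    by exists (Ordinal (ltn0Sn N)); apply/asboolP; exists [::].
  exists (Ordinal hN1); apply/asboolP; exists [:: b] => /=.
  by rewrite lt_neqAle nab ab.
have hc : (0 < #|P|)%N by apply/card_gt0P; exists i0.
have -> : lam a b = \max_(i in P) (nat_of_ord i) by rewrite /lam; by apply: eq_bigl => i.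
have [i1 Pi1 ->] := eq_bigmax_cond (fun n : 'I_N.+1 => nat_of_ord n) hc.
by move: Pi1; rewrite unfold_in => /asboolP.
Qed.
Arguments lam_ex {a b}.


Lemma max_cpath (a b : L) s : path <%O a s -> last a s = b ->
  (forall s2, path <%O a s2 -> last a s2 = b -> (size s2 <= size s)%N) -> cpath a s.
Proof.
elim: s a => //= d s IH a /andP[ad hp] hl hmax; split.
  split => // -[w [aw wd]].
  have := hmax [:: w, d & s]; rewrite /= aw wd hp hl => /(_ isT erefl).
  by rewrite ltnn.
apply: IH => // s2 hp2 hl2.
by have := hmax (d :: s2); rewrite /= ad hp2 hl2 ltnS => /(_ isT erefl).
Qed.

Lemma lam_cpath (a b : L) : a <= b ->
  exists s, cpath a s /\ last a s = b /\ size s = lam a b.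
Proof.
move=> /lam_ex [s [hp [hl hs]]]; exists s; split => //.
apply: max_cpath hp hl _ => s2 hp2 hl2; rewrite hs; exact: lam_ub.
Qed.
Arguments lam_cpath {a b}.

Lemma cpath_shift (a c : L) s : cpath a s -> covers a c -> c <= last a s ->
  exists s2, path <%O c s2 /\ last c s2 = last a s /\ (size s2).+1 = size s.
Proof.
elim: s a c => [|d s IH] a c /=.
  by move=> _ /covers_lt ac ca; have := lt_le_trans ac ca; rewrite ltxx.
move=> [ad hcp] ac cl.
have ad' := covers_lt ad; have ac' := covers_lt ac.
case: (boolP (c <= d)) => cd.
  have ecd := cover_eq ad ac' cd; subst d.
  by exists s; split => //; exact: cpath_path.
have hm : c `&` d = a.
  have hle : a <= c `&` d by rewrite lexI !ltW.
  case: (boolP (a == c `&` d)) => [/eqP <-//|na].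
  have := @cover_eq a c (c `&` d) ac; rewrite lt_neqAle na hle leIl.
  by move=> /(_ isT isT) e; move: cd; rewrite -e leIr.
have hcov : covers d (c `|` d).
  by have := hUSM c d; rewrite hm joinC => /(_ ac).
have dl := path_le_last (cpath_path hcp).
have hcl : c `|` d <= last d s by rewrite leUx cl dl.
have [s3 [hp3 [hl3 hs3]]] := IH d (c `|` d) hcp hcov hcl.
exists (c `|` d :: s3); split; last by split => //=; rewrite hs3.
rewrite /= hp3 andbT lt_neqAle leUl andbT; apply/eqP => e.
have dc : d <= c by rewrite e leUr.
by have edc := cover_eq ac ad' dc; move: cd; rewrite edc lexx.
Qed.
Arguments cpath_shift {a c s}.

Lemma KL (a c b : L) : covers a c -> c <= b -> lam a b = (lam c b).+1.
Proof.
move=> ac cb; have ac' := covers_lt ac.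
apply/eqP; rewrite eqn_leq; apply/andP; split.
  have [s [hp [hl hs]]] := lam_cpath (le_trans (ltW ac') cb).
  rewrite -hl in cb.
  have [s2 [hp2 [hl2 hs2]]] := cpath_shift hp ac cb.
  rewrite -hs -hs2 ltnS; apply: lam_ub hp2 _; by rewrite hl2 hl.
have [s [hp [hl hs]]] := lam_ex cb.
rewrite -hs; apply: (lam_ub (s := c :: s)) => //=.
by rewrite ac' hp.
Qed.

Lemma top_ex (x0 : L) : exists t : L, forall x, x <= t.
Proof.
pose P := fun n => `[< exists s : seq L, sorted <%O s /\ size s = n >].
have hex : exists n, P n by exists 1%N; apply/asboolP; exists [:: x0].
have hb : forall n, P n -> (n <= N)%N by move=> n /asboolP [s [hs <-]]; exact: hN.
case: (ex_maxnP hex hb) => n /asboolP [s [hs hsz]] hmax.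
case: s hs hsz => [|y s1] hs hsz.
  by have := hmax 1%N (introT (asboolP _) (ex_intro _ [:: x0] (conj isT erefl))); rewrite -hsz.
exists (last y s1) => x; apply/negP => /negP hx.
suff : P n.+1 by move/hmax; rewrite ltnn.
apply/asboolP; exists (rcons (y :: s1) (last y s1 `|` x)); split; last by rewrite size_rcons hsz.
rewrite /= rcons_path; move: hs => /= -> /=; rewrite lt_neqAle leUl andbT; apply/eqP => e.
by move: hx; rewrite e leUr.
Qed.

Section G.
Variable t : L.
Hypothesis ht : forall x : L, x <= t.
Definition g (a : L) := lam a t.

Lemma g_cover (a c : L) : covers a c -> g a = (g c).+1.
Proof. by move=> ac; apply: KL. Qed.
Arguments g_cover {a c}.

Lemma up_walk (a b : L) : a <= b -> exists n, walk n a b /\ g a = (g b + n)%N.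
Proof.
move=> /lam_cpath [s [hc [hl _]]]; exists (size s); subst b.
elim: s a hc => [|d s IH] a /=; first by rewrite addn0.
move=> [ad hc]; have [hw hg] := IH d hc; split.
  by exists d; split => //; left.
by rewrite (g_cover ad) hg addnS.
Qed.
Arguments up_walk {a b}.

Lemma g_le (a b : L) : a <= b -> (g b <= g a)%N.
Proof. by move=> /up_walk [n [_ ->]]; rewrite leq_addr. Qed.
Arguments g_le {a b}.

Lemma g_lt (a b : L) : a < b -> (g b < g a)%N.
Proof.
move=> ab; have [n [hw hg]] := up_walk (ltW ab).
case: n hw hg => [/= e|n _ ->]; last by rewrite addnS ltnS leq_addr.
by move: ab; rewrite e ltxx.
Qed.
Arguments g_lt {a b}.

Lemma join_g (a b c : L) : covers a b -> (g (b `|` c) <= g (a `|` c) <= (g (b `|` c)).+1)%N.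
Proof.
by move=> ab; case: (join_cover c ab) => [->|/g_cover ->]; rewrite ?leqnn ?leqnSn.
Qed.
Arguments join_g {a b}.

Lemma lower n (w x : L) : walk n w x -> (g w + g x <= 2 * g (w `|` x) + n)%N.
Proof.
elim: n w => [|n IH] w /=.
  by move=> ->; rewrite joinxx addn0 mul2n addnn.
move=> [w1 [[hc|hc] hw]]; have := IH _ hw.
  have := g_cover hc; have := join_g x hc; lia.
have := g_cover hc; have := join_g x hc; lia.
Qed.
Arguments lower {n w x}.

Lemma upper (w x : L) : walk (g w + g x - 2 * g (w `|` x)) w x.
Proof.
have [n1 [hw1 hg1]] := up_walk (leUl w x).
have [n2 [hw2 hg2]] := up_walk (leUr x w).
have -> : (g w + g x - 2 * g (w `|` x) = n1 + n2)%N by lia.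
exact: walk_cat hw1 (walk_rev hw2).
Qed.

Lemma dist_eq (w x : L) : dist w x = (g w + g x - 2 * g (w `|` x))%N.
Proof.
rewrite /dist; case: pselect => [h|nh]; last first.
  by exfalso; apply: nh; eexists; apply/asboolP; exact: upper.
case: ex_minnP => m /asboolP hm hmin.
apply/eqP; rewrite eqn_leq; apply/andP; split.
  by apply: hmin; apply/asboolP; exact: upper.
have := lower hm; lia.
Qed.

End G.

End Aux.

Theorem lemma3p2 (disp : Order.disp_t) (L : bLatticeType disp)
  (hUSM : upper_semimodular (L := L)) (hfin : finite_length (L := L))
  (k : nat) (hk : (0 < k)%N) (xi : 'I_k -> L) (z : L)
  (hz : ~ (z <= \join_(i < k) xi i))
  (hPB : (#|[pred i : 'I_k | (xi i >< z)%O]| <= #|[pred i : 'I_k | (xi i < z)%O]|)%N) :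
  ~ is_median xi z.
Proof.
move=> hmed.
case: hfin => N hN.
have [t ht] := top_ex N hN z.
have DE := dist_eq hUSM N hN t ht.
have GL := g_le hUSM N hN t ht.
have GT := g_lt hUSM N hN t ht.
set G := g N t in DE GL GT; clearbody G.
set c := \join_(i < k) xi i.
have xc : forall i, xi i <= c by move=> i; exact: (joins_sup (P := xpredT)).
set y := z `&` c.
have yz : y < z.
  rewrite lt_neqAle leIl andbT; apply/eqP => e; apply: hz; rewrite -e leIr //.
have hyz := GT _ _ yz.
set m := (G y - G z)%N.
pose b i := ((xi i < z) : nat). pose p i := ((xi i >< z) : nat).
have per : forall i, (dist y (xi i) + m * b i + 2 * p i <= dist z (xi i) + m * p i)%N
                     /\ (b i + p i = 1)%N.
  move=> i; rewrite /b /p !DE.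
  have x_c := xc i.
  case: (comparableP (xi i) z) => hx /=.
  - have hxy : xi i <= y by rewrite lexI (ltW hx) x_c.
    rewrite (join_l (ltW hx)) (join_l hxy).
    have := GL _ _ hxy; have := GL _ _ (ltW hx); split; lia.
  - by exfalso; apply: hz; exact: le_trans (ltW hx) x_c.
  - have h1 : y `|` xi i < z `|` xi i.
      rewrite lt_neqAle leU2 ?leIl // andbT; apply/eqP => e.
      have : z `|` xi i <= c by rewrite -e leUx leIr x_c.
      by rewrite leUx => /andP[zc _]; apply: hz.
    have H3 := GT _ _ h1.
    have H2 := GL _ _ (leUl z (xi i)); have H1 := GL _ _ (leUr (xi i) z).
    have H0 := GL _ _ (leUl y (xi i)); have H := GL _ _ (leUr (xi i) y).
    rewrite /m; split; last by [].
    move: H H0 H1 H2 H3 hyz; clear; move: (G y) (G z) (G (xi i)) (G (y `|` xi i)) (G (z `|` xi i)) => a1 a2 a3 a4 a5.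
    lia.
  - by exfalso; apply: hz; rewrite -hx.
have hmed' := hmed y.
rewrite /remoteness in hmed'.
have S1 : (\sum_(i < k) (dist y (xi i) + m * b i + 2 * p i) <=
           \sum_(i < k) (dist z (xi i) + m * p i))%N.
  by apply: leq_sum => i _; case: (per i).
have S2 : (\sum_(i < k) (b i + p i) = k)%N.
  by rewrite (eq_bigr (fun=> 1%N)) ?sum1_card ?card_ord // => i _; case: (per i).
rewrite !big_split /= -!big_distrr /= in S1.
rewrite big_split /= in S2.
have cB : #|[pred i : 'I_k | (xi i < z)%O]| = (\sum_(i < k) b i)%N.
  by rewrite -sum1_card big_mkcond /=; apply: eq_bigr => i _; rewrite /b inE; case: (_ < _).
have cP : #|[pred i : 'I_k | (xi i >< z)%O]| = (\sum_(i < k) p i)%N.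
  by rewrite -sum1_card big_mkcond /=; apply: eq_bigr => i _; rewrite /p inE; case: (_ >< _).
rewrite cB cP in hPB.
move: S1 S2 hPB hmed'.
set Ry := (\sum_(i < k) dist y (xi i))%N.
set Rz := (\sum_(i < k) dist z (xi i))%N.
set B := (\sum_(i < k) b i)%N.
set P := (\sum_(i < k) p i)%N.
move=> S1 S2 hPB hmed'.
have mge : (0 < m)%N by rewrite /m; lia.
have h1 : (m * P <= m * B)%N by rewrite leq_mul2l hPB orbT.
have h2 : (P = 0 -> 0 < m * B)%N by move=> P0; rewrite muln_gt0 mge /=; lia.
rewrite big1_eq addn0 in S1.
have h3 : (P = 0 -> m * P = 0)%N by move=> ->; rewrite muln0.
move: S1 h1 h2 h3; move: (m * B)%N (m * P)%N => mB mP S1' h1' h2' h3'.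
clearbody Ry Rz B P.
case: (posnP P) => P0; [have := h2' P0; have := h3' P0|]; lia.
Qed.
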